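(* Let $\alpha_1,\dots,\alpha_4$ be constants, $H=H(t,t^-,q,q^-,p,p^-)$ smooth, and $X=\eta(t,q,p)\partial_q+\nu(t,q,p)\partial_p$ (i.e. $\xi\equiv0$) such that $$\Omega=\nu^{-}(\alpha_{1}\dot{q}+\alpha_{2}\dot{q}^{-})+p^{-}(\alpha_{1}D(\eta)+\alpha_{2}D(\eta^{-}))+\nu(\alpha_{3}\dot{q}+\alpha_{4}\dot{q}^{-})+p(\alpha_{3}D(\eta)+\alpha_{4}D(\eta^{-}))-\eta H_q-\nu H_p-\eta^{-}H_{q^-}-\nu^{-}H_{p^-}=0.$$ Then on the solutions of the delay canonical Hamiltonian equations $$\alpha_{1}\dot{q}^{+}+(\alpha_{2}+\alpha_{3})\dot{q}+\alpha_{4}\dot{q}^{-}=\frac{\partial}{\partial p}(H+H^{+}),\qquad \alpha_{4}\dot{p}^{+}+(\alpha_{2}+\alpha_{3})\dot{p}+\alpha_{1}\dot{p}^{-}=-\frac{\partial}{\partial q}(H+H^{+}),$$ considered with the constant delay $t^+-t=t-t^-=\tau$, the relation $D(C)=(S_+-1)P$ holds, where $C=\eta(\alpha_{4}p^{+}+(\alpha_{2}+\alpha_{3})p+\alpha_{1}p^{-})$ and $P=(\alpha_{2}p^{-}+\alpha_{4}p)D(\eta^{-})+\nu^{-}(\alpha_{1}\dot{q}+\alpha_{2}\dot{q}^{-})-\eta^{-}H_{q^-}-\nu^{-}H_{p^-}$.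
   Context: Constant delay $\tau>0$; $t^\pm=t\pm\tau$, $f^\pm=f(t\pm\tau)$; scalar $q,p$. $S_\pm$ are the forward/backward shift operators on expressions (shifting all arguments by one step); $\eta^\pm=S_\pm(\eta)$, $\nu^\pm=S_\pm(\nu)$; $H^+=S_+(H)=H(t^+,t,q^+,q,p^+,p)$. $D$ is the total derivative acting on variables at $t^-,t,t^+$. $\Omega$ is the invariance expression $X(\tilde H)+\tilde HD(\xi)$ with $\tilde H=p^{-}(\alpha_{1}\dot{q}+\alpha_{2}\dot{q}^{-})+p(\alpha_{3}\dot{q}+\alpha_{4}\dot{q}^{-})-H$, specialized to $\xi\equiv0$. *)

(* Defs.v *)
From Stdlib Require Import Reals.
From Coquelicot Require Import Coquelicot.
Open Scope R_scope.

Definition F3 := R -> R -> R -> R.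

Definition d3_1 (f : F3) : F3 := fun t q p => Derive (fun s => f s q p) t.
Definition d3_2 (f : F3) : F3 := fun t q p => Derive (fun s => f t s p) q.
Definition d3_3 (f : F3) : F3 := fun t q p => Derive (fun s => f t q s) p.

Definition uncurry3 (f : F3) (v : R * R * R) : R :=
  match v with (a, b, c) => f a b c end.

Fixpoint Ck3 (n : nat) (f : F3) : Prop :=
  match n with
  | O => forall x : R * R * R, continuous (uncurry3 f) x
  | S m =>
      Ck3 m f /\
      (forall t q p, ex_derive (fun s => f s q p) t /\
                     ex_derive (fun s => f t s p) q /\
                     ex_derive (fun s => f t q s) p) /\
      Ck3 m (d3_1 f) /\ Ck3 m (d3_2 f) /\ Ck3 m (d3_3 f)
  end.

Definition smooth3 (f : F3) : Prop := forall n, Ck3 n f.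

(* ---------- functions of 6 variables H(t,t^-,q,q^-,p,p^-) ---------- *)
Definition F6 := R -> R -> R -> R -> R -> R -> R.

Definition d6_1 (f : F6) : F6 := fun a b c d e g => Derive (fun s => f s b c d e g) a.
Definition d6_2 (f : F6) : F6 := fun a b c d e g => Derive (fun s => f a s c d e g) b.
Definition d6_3 (f : F6) : F6 := fun a b c d e g => Derive (fun s => f a b s d e g) c.
Definition d6_4 (f : F6) : F6 := fun a b c d e g => Derive (fun s => f a b c s e g) d.
Definition d6_5 (f : F6) : F6 := fun a b c d e g => Derive (fun s => f a b c d s g) e.
Definition d6_6 (f : F6) : F6 := fun a b c d e g => Derive (fun s => f a b c d e s) g.

Definition uncurry6 (f : F6) (v : R * R * R * R * R * R) : R :=
  match v with (a, b, c, d, e, g) => f a b c d e g end.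

Fixpoint Ck6 (n : nat) (f : F6) : Prop :=
  match n with
  | O => forall x : R * R * R * R * R * R, continuous (uncurry6 f) x
  | S m =>
      Ck6 m f /\
      (forall a b c d e g,
          ex_derive (fun s => f s b c d e g) a /\
          ex_derive (fun s => f a s c d e g) b /\
          ex_derive (fun s => f a b s d e g) c /\
          ex_derive (fun s => f a b c s e g) d /\
          ex_derive (fun s => f a b c d s g) e /\
          ex_derive (fun s => f a b c d e s) g) /\
      Ck6 m (d6_1 f) /\ Ck6 m (d6_2 f) /\ Ck6 m (d6_3 f) /\
      Ck6 m (d6_4 f) /\ Ck6 m (d6_5 f) /\ Ck6 m (d6_6 f)
  end.

Definition smooth6 (f : F6) : Prop := forall n, Ck6 n f.

(* ---------- the invariance expression Omega (xi = 0), as a function on the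
   jet variables (t, q, q^-, p, p^-, qdot, qdot^-, pdot, pdot^-), with
   t^- = t - tau. *)
Definition Omega (a1 a2 a3 a4 tau : R) (H : F6) (eta nu : F3)
    (t q qm p pm dq dqm dp dpm : R) : R :=
  let tm := t - tau in
  let Deta := d3_1 eta t q p + dq * d3_2 eta t q p + dp * d3_3 eta t q p in
  let Detam := d3_1 eta tm qm pm + dqm * d3_2 eta tm qm pm
               + dpm * d3_3 eta tm qm pm in
  nu tm qm pm * (a1 * dq + a2 * dqm)
  + pm * (a1 * Deta + a2 * Detam)
  + nu t q p * (a3 * dq + a4 * dqm)
  + p * (a3 * Deta + a4 * Detam)
  - eta t q p * d6_3 H t tm q qm p pm
  - nu t q p * d6_5 H t tm q qm p pm
  - eta tm qm pm * d6_4 H t tm q qm p pm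
  - nu tm qm pm * d6_6 H t tm q qm p pm.

Definition Ctraj (a1 a2 a3 a4 tau : R) (eta : F3) (q p : R -> R) (t : R) : R :=
  eta t (q t) (p t) * (a4 * p (t + tau) + (a2 + a3) * p t + a1 * p (t - tau)).

Definition Ptraj (a1 a2 a3 a4 tau : R) (H : F6) (eta nu : F3) (q p : R -> R)
    (t : R) : R :=
  let tm := t - tau in
  (a2 * p tm + a4 * p t) * Derive (fun s => eta (s - tau) (q (s - tau)) (p (s - tau))) t
  + nu tm (q tm) (p tm) * (a1 * Derive q t + a2 * Derive q tm)
  - eta tm (q tm) (p tm) * d6_4 H t tm (q t) (q tm) (p t) (p tm)
  - nu tm (q tm) (p tm) * d6_6 H t tm (q t) (q tm) (p t) (p tm).

(* Main.v *)
Require Import Defs.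
From Stdlib Require Import Reals Lra.
From Coquelicot Require Import Coquelicot.
Open Scope R_scope.

Lemma Lslice (G dG : R -> R -> R) (w : R -> R) t dw :
  (forall s c, is_derive (G s) c (dG s c)) ->
  (forall eps, 0 < eps -> exists del, 0 < del /\ forall s c, Rabs (s - t) < del ->
       Rabs (c - w t) < del -> Rabs (dG s c - dG t (w t)) < eps) ->
  is_derive w t dw ->
  is_derive (fun s => G s (w s) - G s (w t)) t (dG t (w t) * dw).
Proof.
  intros HG Hc Hw. apply is_derive_Reals. apply is_derive_Reals in Hw.
  intros eps Heps.
  set (K := dG t (w t)).
  pose proof (Rabs_pos K) as HK0. pose proof (Rabs_pos dw) as Hdw0.
  set (e1 := Rmin 1 (eps / (2 * (Rabs K + 1)))).
  assert (He1 : 0 < e1).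
  { unfold e1; apply Rmin_glb_lt; [lra|]. apply Rdiv_lt_0_compat; lra. }
  assert (He1a : e1 <= 1) by apply Rmin_l.
  assert (He1b : e1 * (Rabs K + 1) <= eps / 2).
  { assert (e1 <= eps / (2 * (Rabs K + 1))) by apply Rmin_r.
    replace (eps/2) with (eps / (2 * (Rabs K + 1)) * (Rabs K + 1)) by (field; lra).
    apply Rmult_le_compat_r; lra. }
  destruct (Hw e1 He1) as [d1 Hd1].
  set (e2 := eps / (2 * (Rabs dw + 1))).
  assert (He2 : 0 < e2) by (unfold e2; apply Rdiv_lt_0_compat; lra).
  assert (He2b : e2 * (Rabs dw + 1) = eps / 2) by (unfold e2; field; lra).
  destruct (Hc e2 He2) as [d2 [Hd2 Hd2']].
  assert (Hd3 : 0 < d2 / (Rabs dw + 1)) by (apply Rdiv_lt_0_compat; lra).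
  assert (Hd: 0 < Rmin d1 (Rmin d2 (d2 / (Rabs dw + 1)))).
  { apply Rmin_glb_lt; [apply cond_pos|]. apply Rmin_glb_lt; lra. }
  exists (mkposreal _ Hd). intros h Hh0 Hh. simpl in Hh.
  assert (h1 : Rabs h < d1) by (eapply Rlt_le_trans; [exact Hh| apply Rmin_l]).
  assert (h2 : Rabs h < Rmin d2 (d2 / (Rabs dw + 1))) by (eapply Rlt_le_trans; [exact Hh| apply Rmin_r]).
  assert (h2a : Rabs h < d2) by (eapply Rlt_le_trans; [exact h2| apply Rmin_l]).
  assert (h3 : Rabs h < d2 / (Rabs dw + 1)) by (eapply Rlt_le_trans; [exact h2| apply Rmin_r]).
  specialize (Hd1 h Hh0 h1).
  destruct (MVT_gen (G (t+h)) (w t) (w (t+h)) (dG (t+h))) as [c [Hcr Hmvt]].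
  { intros; apply HG. }
  { intros x _. apply continuity_pt_filterlim. apply (ex_derive_continuous (K:=R_AbsRing) (V:=R_NormedModule)).
    exists (dG (t+h) x); apply HG. }
  set (r := w (t+h) - w t) in *.
  assert (Hrh : (G (t+h) (w (t+h)) - G (t+h) (w t) - (G t (w t) - G t (w t)))/h
      = dG (t+h) c * (r/h)).
  { rewrite Hmvt. unfold r. field. exact Hh0. }
  rewrite Hrh.
  set (B := r / h - dw) in *.
  assert (HB : Rabs B < e1) by exact Hd1.
  assert (Hrh1 : Rabs (r / h) < Rabs dw + 1).
  { replace (r/h) with (dw + B) by (unfold B; ring).
    pose proof (Rabs_triang dw B). lra. }
  assert (Hr : Rabs r <= Rabs h * (Rabs dw + 1)).
  { replace r with (h * (r / h)) by (field; exact Hh0). rewrite Rabs_mult.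
    apply Rmult_le_compat_l; [apply Rabs_pos| lra]. }
  assert (Hr2 : Rabs h * (Rabs dw + 1) < d2).
  { replace d2 with (d2 / (Rabs dw + 1) * (Rabs dw + 1)) by (field; lra).
    apply Rmult_lt_compat_r; lra. }
  assert (Hcw : Rabs (c - w t) <= Rabs r).
  { unfold r. revert Hcr. unfold Rmin, Rmax.
    destruct (Rle_dec (w t) (w (t+h))); intros [Ha Hb];
      unfold Rabs; repeat destruct Rcase_abs; lra. }
  assert (HA : Rabs (dG (t+h) c - K) < e2).
  { apply Hd2'. replace (t + h - t) with h by ring. lra. lra. }
  set (A := dG (t+h) c - K) in *.
  replace (dG (t+h) c * (r/h) - K * dw) with (A * (r/h) + K * B) by (unfold A, B; ring).
  eapply Rle_lt_trans; [apply Rabs_triang|]. rewrite !Rabs_mult.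
  assert (Rabs A * Rabs (r/h) <= e2 * (Rabs dw + 1)).
  { apply Rmult_le_compat; try apply Rabs_pos; lra. }
  assert (Rabs K * Rabs B <= Rabs K * e1) by (apply Rmult_le_compat_l; lra).
  nra.
Qed.

Lemma cont3 (g : F3) a b c : continuous (uncurry3 g) (a,b,c) ->
  forall eps, 0 < eps -> exists del, 0 < del /\ forall u v w,
    Rabs (u - a) < del -> Rabs (v - b) < del -> Rabs (w - c) < del ->
    Rabs (g u v w - g a b c) < eps.
Proof.
  intros Hc eps Heps.
  destruct (proj1 (filterlim_locally _ _) Hc (mkposreal _ Heps)) as [del Hdel].
  exists del. split; [apply cond_pos|]. intros u v w Hu Hv Hw.
  apply (Hdel (u,v,w)). split; [split|]; assumption.
Qed.

Lemma cont1 (x : R -> R) t : continuous x t ->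
  forall eps, 0 < eps -> exists del, 0 < del /\ forall s,
    Rabs (s - t) < del -> Rabs (x s - x t) < eps.
Proof.
  intros Hc eps Heps.
  destruct (proj1 (filterlim_locally _ _) Hc (mkposreal _ Heps)) as [del Hdel].
  exists del. split; [apply cond_pos|]. intros s Hs.
  apply (Hdel s). exact Hs.
Qed.

Lemma xcont (x : R -> R) t dx : is_derive x t dx ->
  forall eps, 0 < eps -> exists del, 0 < del /\ forall s,
    Rabs (s - t) < del -> Rabs (x s - x t) < eps.
Proof.
  intros H. apply cont1.
  apply (ex_derive_continuous (K:=R_AbsRing) (V:=R_NormedModule)). exists dx; exact H.
Qed.

Lemma chain3 (f : F3) (x y z : R -> R) t dx dy dz :
  Ck3 1 f -> is_derive x t dx -> is_derive y t dy -> is_derive z t dz ->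
  is_derive (fun s => f (x s) (y s) (z s)) t
    (d3_1 f (x t) (y t) (z t) * dx + d3_2 f (x t) (y t) (z t) * dy
     + d3_3 f (x t) (y t) (z t) * dz).
Proof.
  intros [_ [Hex [C1 [C2 C3]]]] Hx Hy Hz.
  assert (D1 : is_derive (fun s => f (x s) (y s) (z s) - f (x s) (y s) (z t)) t
                 (d3_3 f (x t) (y t) (z t) * dz)).
  { apply (Lslice (fun s c => f (x s) (y s) c) (fun s c => d3_3 f (x s) (y s) c) z t dz).
    - intros s c. apply Derive_correct. apply (proj2 (proj2 (Hex _ _ _))).
    - intros eps Heps.
      destruct (cont3 _ _ _ _ (C3 (x t, y t, z t)) eps Heps) as [d0 [Hd0 Hd0']].
      destruct (xcont x t dx Hx d0 Hd0) as [da [Hda Hda']].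
      destruct (xcont y t dy Hy d0 Hd0) as [db [Hdb Hdb']].
      exists (Rmin d0 (Rmin da db)). split.
      + apply Rmin_glb_lt; [lra|]; apply Rmin_glb_lt; lra.
      + intros s c Hs Hc.
        pose proof (Rmin_l d0 (Rmin da db)). pose proof (Rmin_r d0 (Rmin da db)).
        pose proof (Rmin_l da db). pose proof (Rmin_r da db).
        apply Hd0'; [apply Hda'| apply Hdb' | ]; lra.
    - exact Hz. }
  assert (D2 : is_derive (fun s => f (x s) (y s) (z t) - f (x s) (y t) (z t)) t
                 (d3_2 f (x t) (y t) (z t) * dy)).
  { apply (Lslice (fun s c => f (x s) c (z t)) (fun s c => d3_2 f (x s) c (z t)) y t dy).
    - intros s c. apply Derive_correct. apply (proj1 (proj2 (Hex _ _ _))).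
    - intros eps Heps.
      destruct (cont3 _ _ _ _ (C2 (x t, y t, z t)) eps Heps) as [d0 [Hd0 Hd0']].
      destruct (xcont x t dx Hx d0 Hd0) as [da [Hda Hda']].
      exists (Rmin d0 da). split.
      + apply Rmin_glb_lt; lra.
      + intros s c Hs Hc.
        pose proof (Rmin_l d0 da). pose proof (Rmin_r d0 da).
        apply Hd0'; [apply Hda'| | ]; try lra.
        rewrite Rminus_eq_0, Rabs_R0; lra.
    - exact Hy. }
  assert (D3 : is_derive (fun s => f (x s) (y t) (z t) - f (x t) (y t) (z t)) t
                 (d3_1 f (x t) (y t) (z t) * dx)).
  { apply (Lslice (fun s c => f c (y t) (z t)) (fun s c => d3_1 f c (y t) (z t)) x t dx).
    - intros s c. apply Derive_correct. apply (proj1 (Hex _ _ _)).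
    - intros eps Heps.
      destruct (cont3 _ _ _ _ (C1 (x t, y t, z t)) eps Heps) as [d0 [Hd0 Hd0']].
      exists d0. split; [lra|].
      intros s c Hs Hc. apply Hd0'; try lra; rewrite Rminus_eq_0, Rabs_R0; lra.
    - exact Hx. }
  apply is_derive_Reals in D1, D2, D3. apply is_derive_Reals.
  pose proof (derivable_pt_lim_plus _ _ _ _ _ D1 (derivable_pt_lim_plus _ _ _ _ _ D2
     (derivable_pt_lim_plus _ _ _ _ _ D3 (derivable_pt_lim_const (f (x t) (y t) (z t)) t)))) as D.
  unfold plus_fct in D.
  replace (d3_1 f (x t) (y t) (z t) * dx + d3_2 f (x t) (y t) (z t) * dy
     + d3_3 f (x t) (y t) (z t) * dz) with
    (d3_3 f (x t) (y t) (z t) * dz + (d3_2 f (x t) (y t) (z t) * dy + (d3_1 f (x t) (y t) (z t) * dx + 0))) by ring.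
  refine (derivable_pt_lim_ext _ _ _ _ _ D). intros s. unfold fct_cte. ring.
Qed.

Theorem proposition4 (a1 a2 a3 a4 tau : R) (H : F6) (eta nu : F3) (q p : R -> R) :
  0 < tau ->
  smooth6 H -> smooth3 eta -> smooth3 nu ->
  (forall t q0 qm p0 pm dq dqm dp dpm,
      Omega a1 a2 a3 a4 tau H eta nu t q0 qm p0 pm dq dqm dp dpm = 0) ->
  (forall t, ex_derive q t) -> (forall t, ex_derive p t) ->
  (forall t,
      a1 * Derive q (t + tau) + (a2 + a3) * Derive q t + a4 * Derive q (t - tau)
      = d6_5 H t (t - tau) (q t) (q (t - tau)) (p t) (p (t - tau))
        + d6_6 H (t + tau) t (q (t + tau)) (q t) (p (t + tau)) (p t)) ->
  (forall t,
      a4 * Derive p (t + tau) + (a2 + a3) * Derive p t + a1 * Derive p (t - tau)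
      = - (d6_3 H t (t - tau) (q t) (q (t - tau)) (p t) (p (t - tau))
           + d6_4 H (t + tau) t (q (t + tau)) (q t) (p (t + tau)) (p t))) ->
  forall t,
    Derive (Ctraj a1 a2 a3 a4 tau eta q p) t
    = Ptraj a1 a2 a3 a4 tau H eta nu q p (t + tau)
      - Ptraj a1 a2 a3 a4 tau H eta nu q p t.
Proof.
  intros _ _ He _ Hom Hq Hp Heq1 Heq2 t.
  pose proof (He 1%nat) as E1.
  assert (Hq' : forall s, is_derive q s (Derive q s)) by (intros; apply Derive_correct; apply Hq).
  assert (Hp' : forall s, is_derive p s (Derive p s)) by (intros; apply Derive_correct; apply Hp).
  assert (Hsh : forall (g : R -> R) u, (forall s, ex_derive g s) ->
            is_derive (fun s => g (s - tau)) u (Derive g (u - tau))).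
  { intros g u Hg. apply is_derive_Reals.
    pose proof (derivable_pt_lim_comp (fun s => s - tau) g u 1 (Derive g (u - tau))) as X.
    unfold comp in X. replace (Derive g (u - tau)) with (Derive g (u - tau) * 1) by ring.
    apply X.
    - apply is_derive_Reals. auto_derive; try ring; auto.
    - apply is_derive_Reals. apply Derive_correct. apply Hg. }
  assert (Hsh2 : forall (g : R -> R) u, (forall s, ex_derive g s) ->
            is_derive (fun s => g (s + tau)) u (Derive g (u + tau))).
  { intros g u Hg. apply is_derive_Reals.
    pose proof (derivable_pt_lim_comp (fun s => s + tau) g u 1 (Derive g (u + tau))) as X.
    unfold comp in X. replace (Derive g (u + tau)) with (Derive g (u + tau) * 1) by ring.
    apply X.
    - apply is_derive_Reals. auto_derive; try ring; auto.
    - apply is_derive_Reals. apply Derive_correct. apply Hg. }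
  assert (PD : forall u, Derive (fun s => eta (s - tau) (q (s - tau)) (p (s - tau))) u
     = d3_1 eta (u - tau) (q (u - tau)) (p (u - tau)) * 1
       + d3_2 eta (u - tau) (q (u - tau)) (p (u - tau)) * Derive q (u - tau)
       + d3_3 eta (u - tau) (q (u - tau)) (p (u - tau)) * Derive p (u - tau)).
  { intros u. apply is_derive_unique.
    apply (chain3 eta (fun s => s - tau) (fun s => q (s - tau)) (fun s => p (s - tau)) u).
    - exact E1.
    - auto_derive; try ring; auto.
    - apply Hsh; exact Hq.
    - apply Hsh; exact Hp. }
  assert (DC : Derive (Ctraj a1 a2 a3 a4 tau eta q p) t =
     (d3_1 eta t (q t) (p t) * 1 + d3_2 eta t (q t) (p t) * Derive q t
       + d3_3 eta t (q t) (p t) * Derive p t)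
     * (a4 * p (t + tau) + (a2 + a3) * p t + a1 * p (t - tau))
     + eta t (q t) (p t) * (a4 * Derive p (t + tau) + (a2 + a3) * Derive p t
         + a1 * Derive p (t - tau))).
  { apply is_derive_unique. unfold Ctraj. apply is_derive_Reals.
    apply (derivable_pt_lim_mult (fun s => eta s (q s) (p s))
       (fun s => a4 * p (s + tau) + (a2 + a3) * p s + a1 * p (s - tau))).
    - apply is_derive_Reals.
      apply (chain3 eta (fun s => s) q p t); auto. auto_derive; auto.
    - apply is_derive_Reals.
      auto_derive. repeat split; auto. change (fun x : R => p x) with p. unfold Rminus. ring. }
  rewrite DC. unfold Ptraj. rewrite !PD.
  replace (t + tau - tau) with t by ring.
  pose proof (Hom t (q t) (q (t - tau)) (p t) (p (t - tau)) (Derive q t) (Derive q (t - tau))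
     (Derive p t) (Derive p (t - tau))) as Om. unfold Omega in Om. cbv zeta in Om.
  pose proof (f_equal (Rmult (nu t (q t) (p t))) (Heq1 t)) as F1.
  pose proof (f_equal (Rmult (eta t (q t) (p t))) (Heq2 t)) as F2.
  lra.
Qed.
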